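(* Let $q \geq 3$ and $n$ be integers, and let $1 \leq d \leq n/3$. Let $\mathcal{A} \subseteq [q]^n$ be such that for all $x^{(1)}=(x^{(1)}_1, \ldots, x^{(1)}_n)$, $x^{(2)}=(x^{(2)}_1, \ldots, x^{(2)}_n) \in \mathcal{A}$, $|\{i \in [n] \mid x^{(1)}_i = x^{(2)}_i\}| \geq d$. Then $|\mathcal{A}| < q^{\,n-\frac{d}{10}}$.
   Context: $[q]=\{1,\dots,q\}$. *)

(* Defs.v *)
From mathcomp Require Import all_boot.
From Stdlib Require Import Reals.
Set Implicit Arguments. Unset Strict Implicit. Unset Printing Implicit Defensive.

(* [q]^n is represented as {ffun 'I_n -> 'I_q} (coordinates indexed 0..n-1,
   symbols 0..q-1; a relabelling of [n] and [q]). *)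
Definition agree (n q : nat) (x y : {ffun 'I_n -> 'I_q}) : nat :=
  #|[set i : 'I_n | x i == y i]|.

Definition d_intersecting (n q d : nat) (A : {set {ffun 'I_n -> 'I_q}}) : Prop :=
  forall x y, x \in A -> y \in A -> d <= agree x y.

(* Main.v *)
Require Import Defs.
From mathcomp Require Import all_boot.
From mathcomp Require Import zify.
Set Implicit Arguments. Unset Strict Implicit. Unset Printing Implicit Defensive.


Lemma arith_core (k c X b1 g1 Br Gr : nat) : 2 <= k ->
  c * (b1 * g1) <= X ->
  c * k.+1 * b1 * Gr <= k * (2 * X) ->
  c * k.+1 * Br * g1 <= k * (2 * X) ->
  Br <= k * b1 ->
  c * k.+1 * ((b1 + Br) * (g1 + Gr)) <= 2 * k.+1 ^ 2 * X.
Proof.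
move=> hk h1 h2 h4 h3.
rewrite [k.+1 ^ 2]expnS expn1.
case: (posnP b1) => [b0|bpos].
  have -> : Br = 0 by move: h3; rewrite b0 muln0; lia.
  by rewrite b0 !add0n mul0n muln0.
set s := c * (b1 * g1).
have E1 : c * k.+1 * b1 * (g1 + Gr) <= k.+1 * s + k * (2 * X).
  have -> : c * k.+1 * b1 * (g1 + Gr) = k.+1 * s + c * k.+1 * b1 * Gr by rewrite /s; nia.
  by rewrite leq_add2l.
have E4 : k.+1 * Br * s <= k * (2 * X) * b1.
  have -> : k.+1 * Br * s = (c * k.+1 * Br * g1) * b1 by rewrite /s; nia.
  by rewrite leq_mul2r h4 orbT.
suff : b1 * (c * k.+1 * ((b1 + Br) * (g1 + Gr))) <= b1 * (2 * k.+1 ^ 2 * X).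
  rewrite leq_mul2l; case/orP => //; lia.
have -> : b1 * (c * k.+1 * ((b1 + Br) * (g1 + Gr))) = (b1 + Br) * (c * k.+1 * b1 * (g1 + Gr)) by nia.
apply: (leq_trans (leq_mul (leqnn _) E1)).
set t := k.+1 * s.
have ht : t <= k.+1 * X by rewrite /t leq_mul2l h1 orbT.
case: (leqP t (2 * X)) => ht2.
  apply: (@leq_trans ((k.+1 * b1) * (2 * k.+1 * X))).
    apply: leq_mul; lia.
  apply: eq_leq; nia.
have E4' : Br * t <= k * (2 * X) * b1 by rewrite /t; nia.
rewrite [k.+1 ^ 2]expnS expn1.
have hk2 : t <= 2 * k * k * X.
  apply: (leq_trans ht); rewrite leq_mul2r; apply/orP; right; nia.
have P1 : t * t + 4 * k * k * X * X <= (2 * X + 2 * k * k * X) * t.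
  have : (t - 2 * X) * (2 * k * k * X - t) >= 0 by [].
  have e1 : t = (t - 2 * X) + 2 * X by lia.
  have e2 : 2 * k * k * X = (2 * k * k * X - t) + t by lia.
  move: (t - 2 * X) (2 * k * k * X - t) e1 e2 => u v e1 e2 _.
  rewrite e2 e1; nia.
clearbody t s.
have tpos : 0 < t by lia.
rewrite -(leq_pmul2r tpos).
have Q : Br * t * (t + k * (2 * X)) <= k * (2 * X) * b1 * (t + k * (2 * X)).
  by rewrite leq_mul2r E4' orbT.
nia.
Qed.

Lemma lp (q c X : nat) (be ga : 'I_q -> nat) : 3 <= q ->
 (forall a, c * (be a * ga a) <= X) ->
 (forall a b, a != b -> c * q * (be a * ga b) <= 2 * X) ->
 c * q * ((\sum_a be a) * (\sum_a ga a)) <= 2 * q ^ 2 * X.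
Proof.
move=> hq H1 H2.
have q0 : 0 < q by lia.
case: (@arg_maxnP _ (Ordinal q0) predT be isT) => a1 _ amax.
rewrite (bigD1 a1) //= (bigD1 a1 (P:=predT)) //=.
have := @arith_core q.-1 c X (be a1) (ga a1) (\sum_(i | i != a1) be i) (\sum_(i | i != a1) ga i).
have cq : q.-1 = #|predC1 a1| by rewrite cardC1 card_ord.
rewrite prednK //; apply; first lia.
- exact: H1.
- rewrite big_distrr /= cq -sum_nat_const.
  apply: leq_sum => i /= ia.
  by rewrite -mulnA H2 // eq_sym.
- rewrite mulnAC big_distrr /= cq -sum_nat_const.
  apply: leq_sum => i /= ia.
  by rewrite -mulnA [ga a1 * _]mulnC H2.
- rewrite cq -sum_nat_const.
  apply: leq_sum => i /= ia.
  exact: amax.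
Qed.

Section S.
Variable q : nat.

Definition res m (x : {ffun 'I_m.+1 -> 'I_q}) : {ffun 'I_m -> 'I_q} :=
  [ffun i => x (widen_ord (leqnSn m) i)].

Lemma agree_sum n (x y : {ffun 'I_n -> 'I_q}) : agree x y = \sum_(i < n) (x i == y i).
Proof.
rewrite /agree -sum1dep_card big_mkcond /=.
by apply: eq_bigr => i _; case: (x i == y i).
Qed.

Lemma agreeS m (x y : {ffun 'I_m.+1 -> 'I_q}) :
  agree x y = agree (res x) (res y) + (x ord_max == y ord_max).
Proof.
by rewrite !agree_sum big_ord_recr /=; congr (_ + _); apply: eq_bigr => i _; rewrite !ffunE.
Qed.

Lemma agree_le n (x y : {ffun 'I_n -> 'I_q}) : agree x y <= n.
Proof. by rewrite /agree -[X in _ <= X](card_ord n) max_card. Qed.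

Definition fam m (B : {set {ffun 'I_m.+1 -> 'I_q}}) (a : 'I_q) :=
  (@res m) @: [set x in B | x ord_max == a].

Lemma res_inj m (x y : {ffun 'I_m.+1 -> 'I_q}) :
  res x = res y -> x ord_max = y ord_max -> x = y.
Proof.
move=> e em; apply/ffunP => i.
case: (unliftP ord_max i) => [j ->|-> //].
have -> : lift ord_max j = widen_ord (leqnSn m) j by apply: val_inj; rewrite /= /bump leqNgt ltn_ord.
by move/ffunP: e => /(_ j); rewrite !ffunE.
Qed.

Lemma card_fam m (B : {set {ffun 'I_m.+1 -> 'I_q}}) : #|B| = \sum_(a < q) #|fam B a|.
Proof.
rewrite -sum1_card (partition_big (fun x : {ffun 'I_m.+1 -> 'I_q} => x ord_max) (fun _ : 'I_q => true)) //=.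
apply: eq_bigr => a _.
rewrite /fam card_in_imset; last first.
  move=> x y; rewrite !inE => /andP[_ /eqP xa] /andP[_ /eqP ya] e.
  by apply: res_inj => //; rewrite xa ya.
by rewrite sum1dep_card; apply: eq_card => x; rewrite !inE.
Qed.

Lemma famP m (B : {set {ffun 'I_m.+1 -> 'I_q}}) a x' :
  x' \in fam B a -> exists2 x, x \in B & (x ord_max = a /\ x' = res x).
Proof.
by case/imsetP => x; rewrite inE => /andP[xB /eqP xa] ->; exists x.
Qed.


Lemma main (hq : 3 <= q) n : forall d (B C : {set {ffun 'I_n -> 'I_q}}),
  (forall x y, x \in B -> y \in C -> d <= agree x y) ->
  #|B| * #|C| * q ^ d <= q ^ (2 * n) * 2 ^ d.
Proof.
have cardT : forall n (B : {set {ffun 'I_n -> 'I_q}}), #|B| <= q ^ n.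
  move=> k B; apply: (leq_trans (max_card _)).
  by rewrite card_ffun !card_ord.
elim: n => [|m IH] [|e] B C H.
- rewrite !expn0 !muln1; have := cardT 0 B; have := cardT 0 C; rewrite expn0; nia.
- case: (set_0Vmem B) => [->|[x xB]]; first by rewrite cards0.
  case: (set_0Vmem C) => [->|[y yC]]; first by rewrite cards0 muln0.
  by have := H x y xB yC; have := agree_le x y; lia.
- rewrite !expn0 !muln1 mul2n -addnn expnD; apply: leq_mul; exact: cardT.
have := @lp q (q ^ e) (q ^ (2 * m) * 2 ^ e) (fun a => #|fam B a|) (fun a => #|fam C a|) hq.
rewrite -!card_fam => L.
have -> : q ^ (2 * m.+1) * 2 ^ e.+1 = 2 * q ^ 2 * (q ^ (2 * m) * 2 ^ e).
  rewrite mulnS expnD [2 ^ e.+1]expnS; set u := q ^ 2; set v := q ^ (2 * m); set w := 2 ^ e; lia.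
have -> : #|B| * #|C| * q ^ e.+1 = q ^ e * q * (#|B| * #|C|) by rewrite expnSr; nia.
apply: L.
- move=> a; rewrite mulnC; apply: IH => x' y' /famP[x xB [xa ->]] /famP[y yC [ya ->]].
  by have := H x y xB yC; rewrite agreeS xa ya eqxx; lia.
- move=> a b ab.
  suff: #|fam B a| * #|fam C b| * q ^ e.+1 <= q ^ (2 * m) * 2 ^ e.+1.
    rewrite expnSr [2 ^ e.+1]expnS.
    set u := #|fam B a| * #|fam C b|; set v := q ^ e; set w := q ^ (2 * m); set z := 2 ^ e.
    move=> h; apply: (leq_trans _ (leq_trans h _)); apply: eq_leq; nia.
  apply: IH => x' y' /famP[x xB [xa ->]] /famP[y yC [yb ->]].
  have := H x y xB yC; rewrite agreeS xa yb.
  by move/negbTE: ab => ->; rewrite addn0.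
Qed.
End S.

From Stdlib Require Import Reals.
From Stdlib Require Import Lra.

Lemma INR_expn (m k : nat) : INR (expn m k) = (INR m ^ k)%R.
Proof. elim: k => [|k IH] //. rewrite expnS mult_INR IH /=. by []. Qed.

Lemma ln_le' (x y : R) : (0 < x -> x <= y -> ln x <= ln y)%R.
Proof. move=> hx [h|->]; [left; apply: ln_increasing | right]; by []. Qed.

Theorem theorem1p3 (q n d : nat) (A : {set {ffun 'I_n -> 'I_q}}) :
  3 <= q -> 1 <= d -> 3 * d <= n ->
  d_intersecting d A ->
  (INR #|A| < Rpower (INR q) (INR n - INR d / 10))%R.
Proof.
move=> hq hd _ hA.
have M := main hq (B:=A) (C:=A) hA.
have MR : (INR #|A| * INR #|A| * INR q ^ d <= INR q ^ (2 * n) * 2 ^ d)%R.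
  have := le_INR _ _ (ssrnat.leP M).
  by rewrite !mult_INR !INR_expn.
rewrite /Rpower.
case: (posnP #|A|) => [->|Apos].
  by rewrite /= ; apply: exp_pos.
have aP : (0 < INR #|A|)%R by apply: lt_0_INR; apply/ssrnat.ltP.
have qP : (1 < INR q)%R by apply: (@lt_INR 1); apply/ssrnat.ltP; lia.
have Lq : (0 < ln (INR q))%R by rewrite -ln_1; apply: ln_increasing; lra.
have dP : (1 <= INR d)%R by apply: (@le_INR 1); apply/ssrnat.leP.
have K : (5 * ln 2 < 4 * ln (INR q))%R.
  have e5 : (5 * ln 2 = ln (2 ^ 5))%R by rewrite ln_pow; [simpl; lra | lra].
  have e4 : (4 * ln (INR q) = ln (INR q ^ 4))%R by rewrite ln_pow; [simpl; lra | lra].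
  rewrite e5 e4.
  apply: ln_increasing; first by apply: pow_lt; lra.
  have q3 : (3 <= INR q)%R.
    have : (INR 3 <= INR q)%R by apply: le_INR; apply/ssrnat.leP.
    simpl; lra.
  have : (3 ^ 4 <= INR q ^ 4)%R by apply: pow_incr; lra.
  simpl; lra.
have L : (2 * ln (INR #|A|) + INR d * ln (INR q) <= 2 * INR n * ln (INR q) + INR d * ln 2)%R.
  have P0 : (0 < INR #|A| * INR #|A| * INR q ^ d)%R.
    apply: Rmult_lt_0_compat; [apply: Rmult_lt_0_compat|apply: pow_lt]; lra.
  have := ln_le' P0 MR.
  rewrite !ln_mult ?ln_pow; try (apply: pow_lt; lra); try (apply: Rmult_lt_0_compat; lra);
    try lra; try (apply: Rmult_lt_0_compat; try apply: Rmult_lt_0_compat; try apply: pow_lt; lra).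
  rewrite mult_INR /=; lra.
have K2 : (INR d * (5 * ln 2) < INR d * (4 * ln (INR q)))%R.
  apply: Rmult_lt_compat_l; lra.
rewrite -[X in (X < _)%R](exp_ln _ aP).
apply: exp_increasing.
nra.
Qed.
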